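(* Let $\tau>0$, $a\ge2$, let $s,d$ be integers with $1\le s\le d$ and $d=4k$ for an integer $k$. Let $\hat\sigma_*^2=\frac2d\sum_{1\le k\le d/2}Y^2_{(k)}$. Then $$\sup_{P_\xi\in\mathcal G_{a,\tau}}\sup_{\sigma>0}\sup_{\theta\in\Theta_s}\frac{\mathbf E_{\theta,P_\xi,\sigma}(\hat\sigma_*^2-\sigma^2)^2}{\sigma^4}\ge\frac1{64}.$$
   Context: Model: $Y_i=\theta_i+\sigma\xi_i$, $i=1,\dots,d$, $\theta\in\mathbb R^d$, $\sigma>0$, $\xi_i$ i.i.d. with distribution $P_\xi$; $\mathbf E_{\theta,P_\xi,\sigma}$ expectation; $\Theta_s=\{\theta:\|\theta\|_0\le s\}$. $\mathcal G_{a,\tau}$: distributions with $\mathbf E\xi_1=0,\mathbf E\xi_1^2=1$, $\mathbf P(|\xi_1|>t)\le2e^{-(t/\tau)^a}$ for all $t\ge2$. $Y^2_{(1)}\le\dots\le Y^2_{(d)}$ are the ordered values of $Y_1^2,\dots,Y_d^2$. *)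

(* Defs.v *)
From HB Require Import structures.
From mathcomp Require Import all_boot all_order all_algebra.
From mathcomp Require Import all_classical all_reals all_analysis.
Set Implicit Arguments. Unset Strict Implicit. Unset Printing Implicit Defensive.
Import Order.TTheory GRing.Theory Num.Theory.
Import numFieldNormedType.Exports.
Local Open Scope classical_set_scope.
Local Open Scope ring_scope.

Definition G_class {R : realType} (a tau : R) (mu : probability R R) : Prop :=
  mu.-integrable setT (fun x => x%:E) /\
  (\int[mu]_x x%:E = 0)%E /\
  (\int[mu]_x (x ^+ 2)%:E = 1)%E /\
  (forall t : R, 2 <= t ->
     (mu [set x : R | (t < `|x|)%R] <= (2 * expR (- ((t / tau) `^ a)))%:E)%E).

Definition iid_with_law {R : realType} {dO : measure_display} {Omega : measurableType dO}
  (n : nat) (P : probability Omega R) (xi : 'I_n -> Omega -> R)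
  (mu : probability R R) : Prop :=
  (forall i, measurable_fun setT (xi i)) /\
  (forall B : 'I_n -> set R, (forall i, measurable (B i)) ->
     P (\bigcap_(i in [set: 'I_n]) (xi i @^-1` B i)) = (\prod_(i < n) mu (B i))%E).

Definition Theta_s {R : realType} (d s : nat) (theta : 'I_d -> R) : Prop :=
  (#|[set i | theta i != 0%R]| <= s)%N.

Definition sum_smallest {R : realType} (d m : nat) (z : 'I_d -> R) : R :=
  \sum_(j < m) nth 0 (sort <=%R [seq z i | i <- enum 'I_d]) j.

Definition sigma_star_hat {R : realType} (d : nat) (Y : 'I_d -> R) : R :=
  (2 / d%:R) * sum_smallest (d %/ 2) (fun i => Y i ^+ 2).

Definition normalized_risk {R : realType} {dO : measure_display} {Omega : measurableType dO}
  (d : nat) (P : probability Omega R) (xi : 'I_d -> Omega -> R)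
  (sigma : R) (theta : 'I_d -> R) : \bar R :=
  ((\int[P]_w ((sigma_star_hat (fun i => theta i + sigma * xi i w) - sigma ^+ 2) ^+ 2)%:E)
    * ((sigma ^+ 4)^-1)%:E)%E.

(* Main.v *)
Set Warnings "-all".
Set Implicit Arguments. Unset Strict Implicit.
Require Import Defs.
From HB Require Import structures.
From mathcomp Require Import all_boot all_order all_algebra.
From mathcomp Require Import all_classical all_reals all_analysis.
From mathcomp Require Import ring lra zify.
From mathcomp Require Import measurable_realfun.
Import Order.TTheory GRing.Theory Num.Theory.
Local Open Scope classical_set_scope.
Local Open Scope ring_scope.
Section SortPart.
Variable R : realType.

Lemma sorted_two (al be : R) (s : seq R) : al < be ->
  sorted <=%R s -> all (fun x => (x == al) || (x == be)) s ->
  s = nseq (count (pred1 al) s) al ++ nseq (count (pred1 be) s) be.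
Proof.
move=> ab; elim: s => [//|x s IH] /= Hs /andP[Hx Ha].
have Hs' : sorted <=%R s by move: Hs; case: s {IH Ha} => //= y s /andP[].
rewrite {1}(IH Hs' Ha).
case/orP: Hx => /eqP Ex; subst x.
  by rewrite eqxx (lt_eqF ab) /=.
rewrite eqxx (eq_sym be al) (lt_eqF ab) /=.
case Ec: (count (pred1 al) s) => [|n] /=; first by [].
exfalso.
have : al \in s by rewrite -has_pred1 has_count Ec.
have Hp : path <=%R be s by exact: Hs.
move: Hp; rewrite (path_sortedE le_trans) => /andP[/allP Hall _] /Hall.
by rewrite leNgt ab.
Qed.

Lemma sum_ind_nat (a m : nat) :
  \sum_(j < m) ((a <= j)%N%:R : R) = (m - a)%N%:R.
Proof.
elim: m => [|m IH]; first by rewrite big_ord0 sub0n.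
rewrite big_ord_recr /= IH; case: (leqP a m) => H.
  by rewrite subSn // -natrD addn1.
have -> : (m.+1 - a = 0)%N by apply/eqP; rewrite subn_eq0.
have -> : (m - a = 0)%N by apply/eqP; rewrite subn_eq0 ltnW.
by rewrite addr0.
Qed.


Lemma sum_smallest_two (d m : nat) (z : 'I_d -> R) (al be : R) : al < be ->
  (forall i, (z i == al) || (z i == be)) -> (m <= d)%N ->
  sum_smallest m z = m%:R * al +
     (be - al) * (m - (d - count (fun i => z i == be) (enum 'I_d)))%N%:R.
Proof.
move=> ab Hz md; rewrite /sum_smallest.
set s := sort _ _.
have Hperm : perm_eq s [seq z i | i <- enum 'I_d] by rewrite perm_sort.
have Hsort : sorted <=%R s by exact: sort_le_sorted.
have Hall : all (fun x => (x == al) || (x == be)) s.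
  by rewrite (perm_all _ Hperm); apply/allP => x /mapP [i _ ->]; exact: Hz.
have Hs := sorted_two ab Hsort Hall.
have Hsz : size s = d by rewrite (perm_size Hperm) size_map size_enum_ord.
have Hc : count (pred1 be) s = count (fun i => z i == be) (enum 'I_d).
  by rewrite ((permP Hperm) _) count_map.
set a := count (pred1 al) s in Hs.
set c := count (pred1 be) s in Hs Hc.
have Hac : (a + c)%N = d by rewrite -Hsz Hs size_cat !size_nseq.
rewrite -Hc Hs.
transitivity (\sum_(j < m) (al + (be - al) * ((a <= j)%N%:R))).
  apply: eq_bigr => j _.
  have jd : (j < a + c)%N by rewrite Hac (leq_trans (ltn_ord j) md).
  rewrite nth_cat size_nseq nth_nseq.
  case: ltnP => H.
    by rewrite mulr0 addr0.
  have -> : (nseq c be)`_(j - a) = be.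
    by rewrite nth_nseq ltn_subLR // jd.
  by rewrite mulr1 addrC subrK.
rewrite big_split /= sumr_const card_ord -mulr_sumr sum_ind_nat.
by rewrite mulr_natl; congr (_ + _ * (_ - _)%N%:R); rewrite -Hac addnK.
Qed.

End SortPart.
Definition Om (d : nat) : Type := {ffun 'I_d -> bool}.
HB.instance Definition _ d := Finite.on (Om d).
HB.instance Definition _ d := isPointed.Build (Om d) [ffun=> false].
HB.instance Definition _ d := @isMeasurable.Build default_measure_display
  (Om d) discrete_measurable discrete_measurable0
  discrete_measurableC discrete_measurableU.

Section Meas.
Variables (R : realType) (d : nat).

Definition q (b : bool) : R := if b then 1/5 else 4/5.
Lemma q_ge0 b : 0 <= q b. Proof. by case: b; rewrite /q. Qed.
Definition wt (w : Om d) : R := \prod_i q (w i).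
Lemma wt_ge0 w : 0 <= wt w. Proof. by apply: prodr_ge0 => i _; exact: q_ge0. Qed.

Definition pt (n : nat) : Om d := nth point (enum {: Om d}) n.
Definition Pm := msum (fun n => mscale (NngNum (wt_ge0 (pt n))) (\d_(pt n) : {measure set (Om d) -> \bar R})) #|{: Om d}|.

Lemma sum_pt (F : Om d -> R) : \sum_(n < #|{: Om d}|) F (pt n) = \sum_w F w.
Proof.
rewrite /pt cardE -(big_mkord xpredT (fun n => F (nth point (enum {: Om d}) n))).
by rewrite -(big_nth point xpredT F) big_enum.
Qed.

Lemma sum_ptE (F : Om d -> \bar R) : (\sum_(n < #|{: Om d}|) F (pt n) = \sum_w F w)%E.
Proof.
rewrite /pt cardE -(big_mkord xpredT (fun n => F (nth point (enum {: Om d}) n))).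
by rewrite -(big_nth point xpredT F) big_enum.
Qed.

Lemma PmE A : Pm A = (\sum_w wt w * (w \in A)%:R)%:E.
Proof.
rewrite /Pm /msum /= /mscale /=.
rewrite -sum_pt sumEFin; congr EFin; by apply: eq_bigr => n _; rewrite ?indicE.
Qed.

Lemma Pm_int (f : Om d -> \bar R) : (forall w, 0 <= f w)%E ->
  (\int[Pm]_w f w = \sum_w (wt w)%:E * f w)%E.
Proof.
move=> f0.
idtac.
rewrite ge0_integral_measure_sum // -sum_ptE; apply: eq_bigr => n _.
rewrite (@ge0_integral_mscale _ _ R (\d_(pt n)) setT measurableT (NngNum (wt_ge0 (pt n))) f) //.
by rewrite integral_dirac // diracT mul1e /=.
Qed.


Lemma sum_prod (f : 'I_d -> bool -> R) :
  \sum_(w : Om d) \prod_i f i (w i) = \prod_i (f i true + f i false).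
Proof.
rewrite (eq_bigr (fun i => \sum_(b : bool) f i b)); last by move=> i _; rewrite big_bool.
by rewrite bigA_distr_bigA.
Qed.

Lemma Pm_setT : Pm setT = 1%E.
Proof.
rewrite PmE (eq_bigr (fun w : Om d => wt w)); last by move=> w _; rewrite in_setT mulr1.
by rewrite /wt (sum_prod (fun _ b => q b)) big1 // => i _; rewrite /q; field.
Qed.

HB.instance Definition _ := Measure.on Pm.
HB.instance Definition _ := Measure_isProbability.Build _ _ _ Pm Pm_setT.

Definition v (b : bool) : R := if b then 2 else - (1/2).
Definition mu0 := measure_add (mscale (NngNum (q_ge0 false)) (\d_(v false) : {measure set R -> \bar R}))
   (mscale (NngNum (q_ge0 true)) (\d_(v true) : {measure set R -> \bar R})).

Lemma mu0E B : mu0 B = (\sum_b q b * (v b \in B)%:R)%:E.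
Proof.
rewrite /mu0 measure_addE big_bool /=.
rewrite /mscale /= !diracE -!EFinM -EFinD addrC.
by [].
Qed.

Lemma mu0_setT : mu0 setT = 1%E.
Proof.
by rewrite mu0E big_bool !in_setT /q /= !mulr1; congr EFin; field.
Qed.

HB.instance Definition _ := Measure.on mu0.
HB.instance Definition _ := Measure_isProbability.Build _ _ _ mu0 mu0_setT.

Lemma mu0_int (f : R -> \bar R) : (forall x, 0 <= f x)%E -> measurable_fun [set: R] f ->
  (\int[mu0]_x f x = (q true)%:E * f (v true) + (q false)%:E * f (v false))%E.
Proof.
move=> f0 mf.
rewrite ge0_integral_measure_add //.
rewrite (@ge0_integral_mscale _ _ R (\d_(v false)) setT measurableT (NngNum (q_ge0 false)) f) //.
rewrite (@ge0_integral_mscale _ _ R (\d_(v true)) setT measurableT (NngNum (q_ge0 true)) f) //.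
by rewrite !integral_dirac // !diracT !mul1e /= addeC.
Qed.


Lemma mu0_G (a tau : R) : G_class a tau mu0.
Proof.
have mx : measurable_fun [set: R] (fun x : R => x%:E).
  by apply/measurable_EFinP; exact: measurable_id.
split; [|split; [|split]].
- apply/integrableP; split => //.
  rewrite mu0_int //; last by apply: measurableT_comp => //.
  by rewrite /v /q /= -!EFinM -EFinD ltry.
- rewrite integralE mu0_int //; last exact: measurable_funepos.
  rewrite mu0_int //; last exact: measurable_funeneg.
  rewrite /v /q /=.
  have h1 : (EFin^\+ (2%R : R) = 2%:E)%E by rewrite funeposE; apply/max_idPl; rewrite lee_fin.
  have h2 : (EFin^\+ ((- (1/2))%R : R) = 0%:E)%E.
    by rewrite funeposE; apply/max_idPr; rewrite lee_fin; lra.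
  have h3 : (EFin^\- (2%R : R) = 0%:E)%E.
    by rewrite funenegE; apply/max_idPr; rewrite /= lee_fin; lra.
  have h4 : (EFin^\- ((- (1/2))%R : R) = (1/2)%R%:E)%E.
    by rewrite funenegE /= opprK; apply/max_idPl; rewrite lee_fin; lra.
  by rewrite h1 h2 h3 h4 -!EFinM -!EFinD; congr EFin; field.
- rewrite (@mu0_int (fun x => (x ^+ 2)%:E)) //; last first.
    by apply/measurable_EFinP; apply: measurable_funX; exact: measurable_id.
    by move=> x; rewrite lee_fin sqr_ge0.
  by rewrite /v /q /= -!EFinM -EFinD; congr EFin; field.
- move=> t t2.
  change (mu0 [set x : R | (t < `|x|)%R] <= (2 * expR (- ((t / tau) `^ a)))%:E)%E.
  rewrite mu0E big_bool /v /q /=.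
  have -> : ((2:R) \in [set x : R | (t < `|x|)%R]) = false.
    apply/negbTE; rewrite notin_setE /= => H; move: H.
    by rewrite ger0_norm // ltNge t2.
  have -> : ((- (1/2) : R) \in [set x : R | (t < `|x|)%R]) = false.
    apply/negbTE; rewrite notin_setE /= => H; move: H.
    rewrite normrN ger0_norm //; apply/negP; rewrite -leNgt; lra.
  rewrite !mulr0 addr0 lee_fin; apply: mulr_ge0 => //; exact: expR_ge0.
Qed.


Definition xi (i : 'I_d) (w : Om d) : R := v (w i).

Lemma iid_ok : iid_with_law Pm xi mu0.
Proof.
split.
  by move=> i.
move=> B mB.
change (Pm (\bigcap_(i in [set: 'I_d]) xi i @^-1` B i) = \prod_(i < d) mu0 (B i))%E.
rewrite PmE (eq_bigr (fun i => (\sum_b q b * (v b \in B i)%:R)%:E)); last by move=> i _; rewrite mu0E.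
rewrite prodEFin; congr EFin.
rewrite (eq_bigr (fun i => q true * (v true \in B i)%:R + q false * (v false \in B i)%:R)); last by move=> i _; rewrite big_bool.
rewrite -(sum_prod (fun i b => q b * (v b \in B i)%:R)).
apply: eq_bigr => w _.
rewrite big_split /=; congr (_ * _).
have [H|H] := pselect (forall i, v (w i) \in B i).
  rewrite big1; last by move=> i _; rewrite H.
  rewrite mem_set //; move=> i _ /=; rewrite /xi; exact/set_mem/H.
have [i Hi] : exists i, ~ (v (w i) \in B i).
  by apply/existsNP => H'; apply: H.
rewrite (bigD1 i) //= (negbTE (introN idP Hi)) mul0r.
rewrite memNset // => Hc; apply: Hi; apply/mem_set; exact: (Hc i I).
Qed.


Lemma prod_ind (i : 'I_d) (g : 'I_d -> R) :
  \prod_l (if l == i then g l else 1) = g i.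
Proof.
rewrite (bigD1 i) //= eqxx big1 ?mulr1 // => l /negbTE ->; by [].
Qed.

Lemma pairE (i j : 'I_d) :
  \sum_w wt w * ((w i)%:R * (w j)%:R) = if i == j then 1/5 else 1/25.
Proof.
rewrite (eq_bigr (fun w : Om d => \prod_l (q (w l) * ((if l == i then (w l)%:R else 1) *
                                     (if l == j then (w l)%:R else 1))))); last first.
  by move=> w _; rewrite big_split /= big_split /= !prod_ind.
rewrite (sum_prod (fun l b => q b * ((if l == i then b%:R else 1) * (if l == j then b%:R else 1)))).
rewrite (eq_bigr (fun l => if (l == i) || (l == j) then 1/5 else 1)); last first.
  by move=> l _; rewrite /q; case: (l == i); case: (l == j) => /=; field.
case: (eqVneq i j) => [ij|ij]; first subst j.
  rewrite (bigD1 i) //= eqxx big1 ?mulr1 // => l /negbTE ->; by [].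
rewrite (bigD1 i) //= eqxx (bigD1 j) /=; last by rewrite eq_sym.
rewrite eqxx orbT big1; first by rewrite mulr1; field.
by move=> l /andP[/negbTE -> /negbTE ->].
Qed.

Definition cr (w : Om d) : R := \sum_i ((w i)%:R : R).

Lemma E0 : \sum_w wt w = 1.
Proof. by rewrite /wt (sum_prod (fun _ b => q b)) big1 // => i _; rewrite /q; field. Qed.

Lemma E1 : \sum_w wt w * cr w = d%:R / 5.
Proof.
rewrite /cr (eq_bigr (fun w : Om d => \sum_i wt w * ((w i)%:R * (w i)%:R))); last first.
  by move=> w _; rewrite mulr_sumr; apply: eq_bigr => i _; case: (w i); rewrite ?mulr1 ?mulr0.
rewrite exchange_big /= (eq_bigr (fun _ => 1/5)); last by move=> i _; rewrite pairE eqxx.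
by rewrite sumr_const card_ord -mulr_natl; field.
Qed.

Lemma E2 : \sum_w wt w * cr w ^+ 2 = (d%:R ^+ 2 + 4 * d%:R) / 25.
Proof.
rewrite /cr (eq_bigr (fun w : Om d => \sum_i \sum_j wt w * ((w i)%:R * (w j)%:R))); last first.
  move=> w _; rewrite expr2 mulr_suml mulr_sumr; apply: eq_bigr => i _.
  by rewrite mulr_sumr mulr_sumr; apply: eq_bigr => j _; rewrite mulrA.
rewrite exchange_big /=.
rewrite (eq_bigr (fun i => d%:R / 25 + 4 / 25)); last first.
  move=> i _; rewrite exchange_big /=.
  rewrite (eq_bigr (fun j => 1 / 25 + 4/25 * (i == j)%:R)); last first.
    by move=> j _; rewrite pairE; case: eqP => _ /=; field.
  rewrite big_split /= sumr_const card_ord -mulr_sumr.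
  rewrite (bigD1 i) //= eqxx big1 ?addr0; last by move=> j /negbTE; rewrite eq_sym => ->.
  by rewrite -mulr_natr /= mulr1; field.
by rewrite sumr_const card_ord -mulr_natl; field.
Qed.


Lemma real_bound (K y x : R) : 0 < K -> (x = 0 \/ x = y - 2 * K) ->
  9/16 - 75 / (128 * K ^+ 2) * (y - 4 * K / 5) ^+ 2 <=
  (2 / (4 * K) * (2 * K * (1/4) + (4 - 1/4) * x) - 1) ^+ 2.
Proof.
move=> K0 Hx.
have e1 : 2 / (4 * K) * (2 * K * (1/4) + (4 - 1/4) * x) = 1/4 + 45 / (16 * K) * x * (2 / 3).
  by field; rewrite gt_eqF.
rewrite e1.
set u := 45 / (16 * K) * x.
have h1 : 9/16 - u <= (1/4 + u * (2/3) - 1) ^+ 2 by nra.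
have h3 : 24 * K * x <= 5 * (y - 4 * K / 5) ^+ 2.
  case: Hx => ->.
    by rewrite mulr0; apply: mulr_ge0 => //; exact: sqr_ge0.
  rewrite -subr_ge0.
  have -> : 5 * (y - 4 * K / 5) ^+ 2 - 24 * K * (y - 2 * K) = 5 * (y - 16 * K / 5) ^+ 2 by field.
  by apply: mulr_ge0 => //; exact: sqr_ge0.
have e2 : u = 45 / (384 * K ^+ 2) * (24 * K * x) by rewrite /u; field; rewrite gt_eqF.
have e3 : 75 / (128 * K ^+ 2) * (y - 4 * K / 5) ^+ 2 =
   45 / (384 * K ^+ 2) * (5 * (y - 4 * K / 5) ^+ 2) by field; rewrite gt_eqF.
have c0 : 0 <= 45 / (384 * K ^+ 2).
  by apply: divr_ge0 => //; apply: mulr_ge0 => //; apply: exprn_ge0; exact: ltW.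
have h4 : u <= 75 / (128 * K ^+ 2) * (y - 4 * K / 5) ^+ 2.
  by rewrite e2 e3; apply: ler_wpM2l.
lra.
Qed.

Lemma count_cr (w : Om d) : (count (fun i => w i) (enum 'I_d))%:R = cr w.
Proof.
rewrite -sum1_count big_mkcond /= natr_sum big_enum /= /cr.
by apply: eq_bigr => i _; case: (w i).
Qed.

Lemma pointwise (k : nat) (dk : d = (4 * k)%N) (k0 : (0 < k)%N) (w : Om d) :
  9/16 - 75 / (128 * k%:R ^+ 2) * (cr w - 4 * k%:R / 5) ^+ 2 <=
  (sigma_star_hat (fun i => 0 + 1 * xi i w) - 1 ^+ 2) ^+ 2.
Proof.
rewrite /sigma_star_hat.
have Hz : forall i : 'I_d, ((0 + 1 * xi i w) ^+ 2 == 1/4) || ((0 + 1 * xi i w) ^+ 2 == 4).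
  move=> i; rewrite /xi /v; case: (w i) => /=; apply/orP; [right|left]; apply/eqP.
    by rewrite add0r mul1r expr2; field.
  by rewrite add0r mul1r sqrrN expr2; field.
have md : (d %/ 2 <= d)%N by exact: leq_div.
have ab : (1/4 : R) < 4 by clear; lra.
rewrite (@sum_smallest_two R d (d %/ 2) (fun i => (0 + 1 * xi i w) ^+ 2) (1/4) 4 ab Hz md).
have Hcnt : count (fun i => (0 + 1 * xi i w) ^+ 2 == 4) (enum 'I_d) = count (fun i => w i) (enum 'I_d).
  apply: eq_count => i; rewrite /xi /v; case: (w i) => /=.
    by apply/eqP; rewrite add0r mul1r expr2; field.
  apply/negbTE; rewrite add0r mul1r sqrrN expr2.
  apply/eqP => H; have : (1/2 * (1/2) : R) < 4 by clear; lra.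
  by rewrite H ltxx.
rewrite Hcnt.
set c := count _ _.
have cd : (c <= d)%N by rewrite /c (leq_trans (count_size _ _)) // size_enum_ord.
have Hc : c%:R = cr w by exact: count_cr.
have dh : (d %/ 2 = 2 * k)%N.
  by rewrite dk (_ : (4 * k = (2 * k) * 2)%N) ?mulnK //; lia.
rewrite dh expr1n.
have K0 : (0 : R) < k%:R by rewrite ltr0n.
have := @real_bound k%:R (cr w) ((2 * k - (d - c))%N%:R) K0.
rewrite dk !natrM.
apply.
case: (leqP c (2 * k)) => h.
  left; have -> : (2 * k - (4 * k - c))%N = 0%N by lia.
  by [].
right; have -> : (2 * k - (4 * k - c))%N = (c - 2 * k)%N by lia.
by rewrite natrB ?natrM -?Hc //; exact: ltnW.
Qed.

Lemma risk_sum (k : nat) (dk : d = (4 * k)%N) (k0 : (0 < k)%N) :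
  1/64 <= \sum_w wt w * (sigma_star_hat (fun i => 0 + 1 * xi i w) - 1 ^+ 2) ^+ 2.
Proof.
set K : R := k%:R.
set C := 75 / (128 * K ^+ 2).
set m := 4 * K / 5.
apply: (@le_trans _ _ (\sum_w wt w * (9/16 - C * (cr w - m) ^+ 2))); last first.
  by apply: ler_sum => w _; apply: ler_wpM2l; [exact: wt_ge0 | exact: (pointwise dk k0)].
rewrite (eq_bigr (fun w : Om d => 9/16 * wt w - C * (wt w * cr w ^+ 2) + (2 * C * m) * (wt w * cr w) - C * m ^+ 2 * wt w)); last first.
  by move=> w _; ring.
rewrite !big_split /= !sumrN -!mulr_sumr E0 E1 E2 dk natrM.
rewrite /C /m -/K.
have K1 : 1 <= K by rewrite /K ler1n.
set e := (X in _ <= X).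
have -> : e = 9/16 - 3/8 * K^-1.
  by rewrite /e; field; rewrite gt_eqF // (lt_le_trans ltr01 K1).
have K0 : 0 < K by exact: (lt_le_trans ltr01 K1).
have : K^-1 <= 1 by rewrite invr_le1 // unitfE gt_eqF.
move: (K^-1) => t; clear; lra.
Qed.

End Meas.

Theorem proposition8 (R : realType) (tau a : R) (s d k : nat) :
  0 < tau -> 2 <= a -> (1 <= s)%N -> (s <= d)%N -> d = (4 * k)%N ->
  (ereal_sup [set r : \bar R | exists (dO : measure_display) (Omega : measurableType dO)
      (P : probability Omega R) (xi : 'I_d -> Omega -> R) (mu : probability R R)
      (sigma : R) (theta : 'I_d -> R),
      [/\ G_class a tau mu, iid_with_law P xi mu, (0 < sigma)%R, Theta_s s theta &
          r = normalized_risk P xi sigma theta]]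
   >= (1 / 64)%:E)%E.
Proof.
move=> tau0 a2 s1 sd dk.
have k0 : (0 < k)%N by lia.
apply: le_ereal_sup_tmp.
exists (normalized_risk (@Pm R d) (@xi R d) 1 (fun _ => 0)).
  exists default_measure_display, (Om d), (@Pm R d), (@xi R d), (@mu0 R), 1, (fun _ => 0).
  split => //.
  - exact: mu0_G.
  - exact: iid_ok.
  - rewrite /Theta_s eq_card0 // => i; apply/negbTE; rewrite notin_setE /=.
    by rewrite eqxx.
rewrite /normalized_risk !expr1n invr1 mule1 Pm_int; last first.
  by move=> w; rewrite lee_fin sqr_ge0.
rewrite (eq_bigr (fun w : Om d => ((@wt R d w) * (sigma_star_hat (fun i => 0 + 1 * @xi R d i w) - 1) ^+ 2)%:E)) //.
rewrite sumEFin lee_fin; have := @risk_sum R d k dk k0; rewrite expr1n; exact.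
Qed.
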